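(* The polynomial $p(t)=t^4+3t^2+1$ is irreducible in $\Gamma_7=\mathbb{Q}(\zeta_7)[t,t^{-1}]$, where $\zeta_7$ is a primitive $7$-th root of unity. *)

(* Defs.v *)
From HB Require Import structures.
From mathcomp Require Import all_boot all_order all_algebra all_field.
Set Implicit Arguments. Unset Strict Implicit. Unset Printing Implicit Defensive.
Import GRing.Theory Num.Theory.
Local Open Scope ring_scope.

(* The Laurent polynomial ring K[t,t^-1] is modelled via {poly K}: every Laurent
   polynomial is t^(-a) * f with f : {poly K}.  Its units are exactly c t^k, c != 0.
   A polynomial f represents (up to the unit t^(-a)) a unit iff it is a monomial. *)
Definition laurent_monomial (K : fieldType) (f : {poly K}) : Prop :=
  exists (c : K) (k : nat), c != 0 /\ f = c *: 'X^k.

(* p is irreducible in K[t,t^-1]: p is nonzero, not a unit, and whenever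
   p = (t^-a f) (t^-b g), i.e. t^(a+b) p = f g, one factor is a unit. *)
Definition laurent_irreducible (K : fieldType) (p : {poly K}) : Prop :=
  [/\ p != 0, ~ laurent_monomial p &
      forall (n : nat) (f g : {poly K}), 'X^n * p = f * g ->
        laurent_monomial f \/ laurent_monomial g].

(* Main.v *)
Require Import Defs.
From HB Require Import structures.
From mathcomp Require Import all_boot all_order all_algebra all_field.
From mathcomp Require Import ring lra.
Import GRing.Theory Num.Theory.
Local Open Scope ring_scope.

Definition Phi7 : {poly rat} := \sum_(i < 7) 'X^i.

Lemma Phi7E (R : nzRingType) (f : {rmorphism rat -> R}) :
  ('X - 1) * map_poly f Phi7 = 'X^7 - 1.
Proof.
by rewrite /Phi7 rmorph_sum /= (eq_bigr (fun i : 'I_7 => 'X^i)) ?subrX1 // => i _; rewrite map_polyXn.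
Qed.

Lemma size_Phi7 : size Phi7 = 7%N.
Proof.
have h : ('X - 1) * Phi7 = 'X^7 - 1 by rewrite /Phi7 subrX1.
have nz : Phi7 != 0.
  apply/eqP=> e; move: h; rewrite e mulr0 => /eqP; rewrite eq_sym -size_poly_eq0.
  by rewrite -polyC1 size_XnsubC.
move: h => /(congr1 (fun p : {poly rat} => size p)) /=; rewrite size_mul ?polyXsubC_eq0 // -polyC1 size_XsubC size_XnsubC //.
by case.
Qed.

Section A.
Variables (L : fieldExtType rat) (z : L).
Hypothesis hz : 7.-primitive_root z.
Hypothesis hgen : <<1%VS; z>>%VS = fullv.

Lemma Phi7z : root (map_poly (in_alg L) Phi7) z.
Proof.
have h := @Phi7E _ (in_alg L).
have h1 := congr1 (fun p => p.[z]) h; move: h1 => /=.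
rewrite !(hornerE, hornerXn) (prim_expr_order hz) subrr.
move/eqP; rewrite mulf_eq0 subr_eq0 => /orP[/eqP z1|]; last by [].
by have := prim_order_dvd hz 1; rewrite expr1 z1 eqxx.
Qed.

Lemma size_ge7 (q : {poly rat}) : (1 < size q)%N -> q %| Phi7 -> (7 <= size q)%N.
Proof.
move=> sq dq.
have /closed_rootP [y ry] : size (map_poly (ratr : rat -> algC) q) != 1%N.
  by rewrite size_map_poly; case: (size q) sq => [|[]].
have ry2 : root (map_poly (ratr : rat -> algC) Phi7) y.
  by move: ry; apply: root_dvdp; rewrite dvdp_map.
have y7 : y ^+ 7 = 1.
  have := congr1 (fun p => p.[y]) (@Phi7E _ (ratr : {rmorphism rat -> algC})) => /=.
  rewrite hornerM (eqP ry2) mulr0 hornerD hornerN hornerXn hornerC => /esym/eqP.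
  by rewrite subr_eq0 => /eqP.
have y1 : y != 1.
  apply/eqP=> e; move: ry2; rewrite e /root /Phi7 rmorph_sum horner_sum /=.
  under eq_bigr do rewrite map_polyXn hornerXn expr1n.
  by rewrite sumr_const card_ord pnatr_eq0.
have [m pm dm] := prim_order_exists (isT : (0 < 7)%N) y7.
have m7 : m = 7%N.
  have := dvdn_leq (isT : (0 < 7)%N) dm.
  move: pm dm; case: m => [|[|[|[|[|[|[|[|m]]]]]]]] //= pm _ _.
  by move: y1; rewrite -(prim_expr_order pm) expr1 eqxx.
rewrite m7 in pm.
have [p [Dp _] hp] := minCpolyP y.
have : p %| q by rewrite -hp.
move=> /dvdp_leq; rewrite -size_poly_eq0; case: (size q) sq => // n _ /(_ isT).
have : size p = 7%N.
  by rewrite -(size_map_poly (ratr : {rmorphism rat -> algC})) -Dp (minCpoly_cyclotomic pm) size_cyclotomic totient_prime.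
by move=> ->.
Qed.

Lemma dimL : \dim (fullv : {vspace L}) = 6%N.
Proof.
have := minPolyOver 1%AS z => /polyOver1P [q Dq].
have : minPoly 1%AS z %| map_poly (in_alg L) Phi7 by apply: minPoly_dvdp; [apply: alg_polyOver| exact: Phi7z].
rewrite Dq dvdp_map => dq.
have sq : size q = (adjoin_degree 1%AS z).+1 by rewrite -size_minPoly Dq size_map_poly.
have h7 : (7 <= size q)%N by apply: size_ge7 => //; rewrite sq.
have h7' : (size q <= 7)%N by rewrite -size_Phi7 dvdp_leq // -size_poly_eq0 size_Phi7.
rewrite -hgen (dim_Fadjoin 1%AS z) dimv1 muln1.
by apply/eqP; rewrite -eqSS -sq eqn_leq h7 h7'.
Qed.
End A.

Lemma adj_deg2 (L : fieldExtType rat) (K : {subfield L}) (y : L) (p : {poly L}) :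
  p \is a polyOver K -> p != 0 -> (size p <= 3)%N -> root p y -> y \notin K ->
  adjoin_degree K y = 2%N.
Proof.
move=> pK p0 sp ry yK.
have := dvdp_leq p0 (minPoly_dvdp pK ry); rewrite size_minPoly => h.
have h1 : adjoin_degree K y != 1%N by rewrite adjoin_deg_eq1.
move: h1 h; rewrite /adjoin_degree; case: (_.-1) => [|[|[|n]]] //= _.
all: by move=> h; have := leq_trans h sp.
Qed.

Section B.
Variables (L : fieldExtType rat) (z : L).
Hypothesis sz : \sum_(i < 7) z ^+ i = 0.
Hypothesis dimL : \dim (fullv : {vspace L}) = 6%N.

Definition eta := z + z ^+ 2 + z ^+ 4.

Lemma z7 : z ^+ 7 = 1.
Proof.
by have := subrX1 z 7; rewrite sz mulr0 => /eqP; rewrite subr_eq0 => /eqP.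
Qed.

Lemma etaE : eta ^+ 2 + eta + 2%:R = 0.
Proof.
have h : eta ^+ 2 + eta + 2%:R = 2%:R * \sum_(i < 7) z ^+ i + z * (z ^+ 7 - 1).
  rewrite !big_ord_recr big_ord0 /= /eta. ring.
by rewrite h sz z7 subrr !mulr0 addr0.
Qed.
End B.

Lemma key_gen (R : comNzRingType) (f : {rmorphism rat -> R}) (a b c : rat) (w x : R) :
  w ^+ 2 = - 7%:R -> x = f a + f b * w -> x ^+ 2 = f c ->
  f (a ^+ 2 - 7%:R * b ^+ 2 - c) + f (2%:R * a * b) * w = 0.
Proof.
move=> hw xe hx.
rewrite !rmorphB !rmorphXn !rmorphM !rmorph_nat -hx xe.
have -> : f a ^+ 2 - 7%:R * f b ^+ 2 - (f a + f b * w) ^+ 2 + 2%:R * f a * f b * w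
     = - (f b) ^+ 2 * (w ^+ 2 + 7%:R) by ring.
by rewrite hw addNr mulr0.
Qed.

Section B2.
Variables (L : fieldExtType rat) (w : L).
Hypothesis hw : w ^+ 2 = - 7%:R.
Hypothesis dimL : \dim (fullv : {vspace L}) = 6%N.

Lemma in1 (r : rat) : r%:A \in (1%VS : {vspace L}).
Proof. by rewrite memvZ // mem1v. Qed.

Lemma inj_alg (r s : rat) : r%:A = s%:A :> L -> r = s.
Proof. by move/eqP; rewrite -subr_eq0 -scalerBl scaler_eq0 oner_eq0 orbF subr_eq0 => /eqP. Qed.

Lemma w_notin : w \notin (1%VS : {vspace L}).
Proof.
apply/negP=> /vlineP [r wr].
have : (r ^+ 2)%:A = (- 7%:R : rat)%:A :> L.
  rewrite -[RHS]/(in_alg L _) rmorphN rmorph_nat -hw wr; exact: (rmorphXn (in_alg L) 2 r).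
move/inj_alg => h; have := sqr_ge0 r; rewrite h.
by [].
Qed.

Lemma sq_form (c : rat) (x : L) : x ^+ 2 = c%:A ->
  exists a b : rat, a * b = 0 /\ a ^+ 2 - 7%:R * b ^+ 2 = c.
Proof.
move=> hx.
have deg_w : adjoin_degree 1%AS w = 2%N.
  apply: (@adj_deg2 _ _ _ ('X^2 - (- 7%:R)%:P)).
  - by rewrite polyOverXnsubC rpredN rpred_nat.
  - by rewrite -size_poly_eq0 size_XnsubC.
  - by rewrite size_XnsubC.
  - by rewrite /root !hornerE hw subrr.
  - exact: w_notin.
have dimK : \dim <<1%AS; w>>%AS = 2%N by rewrite dim_Fadjoin deg_w dimv1.
have xK : x \in <<1%AS; w>>%AS.
  apply/negPn/negP => xK.
  have deg_x : adjoin_degree <<1%AS; w>>%AS x = 2%N.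
    apply: (@adj_deg2 _ _ _ ('X^2 - (c%:A)%:P)).
    - rewrite polyOverXnsubC; apply: (subvP (subv_adjoin _ _)); exact: in1.
    - by rewrite -size_poly_eq0 size_XnsubC.
    - by rewrite size_XnsubC.
    - by rewrite /root !hornerE hx subrr.
    - exact: xK.
  have := field_dimS (subvf <<<<1%AS; w>>%AS; x>>%VS).
  by rewrite dim_Fadjoin deg_x dimK dimL.
set P := Fadjoin_poly 1%AS w x.
have sP : (size P <= 2)%N by rewrite -deg_w size_Fadjoin_poly.
have /polyOver1P [q Pq] := Fadjoin_polyOver 1%AS w x.
have xe : x = (q`_0)%:A + (q`_1)%:A * w.
  rewrite -(Fadjoin_poly_eq xK) -/P (horner_coef_wide _ sP) !big_ord_recr big_ord0 /=.
  by rewrite /P Pq !coef_map /= add0r expr0 mulr1 expr1.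
exists (q`_0), (q`_1).
set a := q`_0 in xe *; set b := q`_1 in xe *.
have key := @key_gen _ (in_alg L) _ _ _ _ _ hw xe hx.
have v0 : 2%:R * a * b = 0.
  apply/eqP/negPn/negP => v0.
  have : w \in (1%VS : {vspace L}).
    have -> : w = in_alg L (- (a ^+ 2 - 7%:R * b ^+ 2 - c) / (2%:R * a * b)).
      have e : in_alg L (2%:R * a * b) * w = - in_alg L (a ^+ 2 - 7%:R * b ^+ 2 - c).
        by apply/eqP; rewrite -addr_eq0 addrC key.
      by rewrite fmorph_div rmorphN mulrC -e mulKf ?fmorph_eq0.
    exact: in1.
  by rewrite (negPf w_notin).
split; first by move: v0 => /eqP; rewrite -mulrA mulf_eq0 pnatr_eq0 /= => /eqP.
move: key; rewrite v0 rmorph0 mul0r addr0 => /eqP; rewrite fmorph_eq0 subr_eq0 => /eqP //.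
Qed.
End B2.

Lemma rat_sq_nat (q : rat) (k : nat) : q ^+ 2 = k%:R -> exists m : nat, k = (m * m)%N.
Proof.
move=> hq.
have hz : (numq q ^+ 2) = (k%:Z * denq q ^+ 2).
  apply: (@intr_inj rat); rewrite intrM [in RHS]intrM (_ : (k%:Z)%:~R = k%:R) // -hq numqE rmorphXn /=.
  ring.
have hn : (`|numq q| * `|numq q| = k * (`|denq q| * `|denq q|))%N.
  by have := congr1 absz hz; rewrite abszM !expr2 !abszM.
have cop := coprime_num_den q.
set N := `|numq q|%N in hn cop; set D := `|denq q|%N in hn cop.
have dv : (D %| N * N)%N by rewrite hn dvdn_mull // dvdn_mulr.
have D1 : D = 1%N.
  have c2 : coprime D (N * N) by rewrite coprimeMr coprime_sym cop.
  by move: c2; rewrite /coprime (gcdn_idPl dv) => /eqP.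
by exists N; rewrite hn D1 !muln1.
Qed.

Lemma no_sq (m k : nat) : k = (m * m)%N -> k \in [:: 5; 7; 35]%N -> False.
Proof.
move=> -> /=.
have [le6|] := leqP m 6.
  by move: le6; case: m => [|[|[|[|[|[|[|]]]]]]].
move=> h; have : (7 * 7 <= m * m)%N by apply: leq_mul.
rewrite !inE; case: (m * m)%N => // n; do 36! (case: n => // n).
Qed.

Section D.
Variable F : fieldType.
Hypothesis nosq : forall x : F, x ^+ 2 = 5%:R \/ x ^+ 2 = -1 \/ x ^+ 2 = - 5%:R -> False.

Local Notation P := ('X^4 + 3%:R *: 'X^2 + 1 : {poly F}).

Lemma P0 : P.[0] = 1.
Proof. by rewrite !hornerD hornerZ !hornerXn hornerC !expr0n /= mulr0 !add0r. Qed.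

Lemma P_noroot r : ~~ root P r.
Proof.
apply/negP => /rootP; rewrite !hornerD hornerZ !hornerXn hornerC => h.
apply: (nosq (2%:R * r ^+ 2 + 3%:R)); left.
have -> : (2%:R * r ^+ 2 + 3%:R) ^+ 2 = 4%:R * (r ^+ 4 + 3%:R * r ^+ 2 + 1) + 5%:R by ring.
by rewrite h mulr0 add0r.
Qed.

Lemma size2_root (f : {poly F}) : size f = 2%N -> exists r, root f r.
Proof.
move=> sf.
have l1 : f`_1 != 0.
  by have := lead_coef_eq0 f; rewrite /lead_coef sf /= -size_poly_eq0 sf => ->.
exists (- f`_0 / f`_1); apply/rootP.
rewrite (@horner_coef_wide _ 2) ?sf // !big_ord_recr big_ord0 /= add0r expr0 mulr1 expr1.
by rewrite mulrC divfK // subrr.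
Qed.

Lemma quad_false (f g : {poly F}) : size f = 3%N -> size g = 3%N -> f * g = P -> False.
Proof.
move=> sf sg e.
have c k : (f * g)`_k = P`_k by rewrite e.
have f3 : f`_3 = 0 by rewrite nth_default // sf.
have f4 : f`_4 = 0 by rewrite nth_default // sf.
have g3 : g`_3 = 0 by rewrite nth_default // sg.
have g4 : g`_4 = 0 by rewrite nth_default // sg.
have u2 : f`_2 != 0.
  by have := lead_coef_eq0 f; rewrite /lead_coef sf /= -size_poly_eq0 sf => ->.
have e0 := c 0%N; have e1 := c 1%N; have e2 := c 2%N; have e3 := c 3%N; have e4 := c 4%N.
move: e0 e1 e2 e3 e4.
rewrite !coefM !big_ord_recr !big_ord0 /= ?subSS ?subn0 ?subnn ?add0r f3 f4 g3 g4.
rewrite !coefD !coefZ !coefXn !coef1 /=.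
rewrite !(mulr0, mul0r, add0r, addr0, mulr1) => e0 e1 e2 e3 e4.
move: u2 e0 e1 e2 e3 e4.
set u0 := f`_0; set u1 := f`_1; set a2 := f`_2; set v0 := g`_0; set v1 := g`_1; set v2 := g`_2.
move=> u2 e0 e1 e2 e3 e4.
have [u10|u1n] := eqVneq u1 0.
  apply: (nosq (a2 * v0 - u0 * v2)); left.
  have -> : (a2 * v0 - u0 * v2) ^+ 2 = (u0 * v2 + u1 * v1 + a2 * v0 - u1 * v1) ^+ 2 - 4%:R * (u0 * v0) * (a2 * v2) by ring.
  rewrite e2 e0 e4 u10 !mul0r subr0; ring.
have hB : a2 * v0 = u0 * v2.
  have h : u1 * (a2 * v0 - u0 * v2) = a2 * (u0 * v1 + u1 * v0) - u0 * (u1 * v2 + a2 * v1) by ring.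
  move: h; rewrite e1 e3 !mulr0 subr0 => /eqP; rewrite mulf_eq0 (negPf u1n) /= subr_eq0 => /eqP //.
have hx : (u1 * v2) ^+ 2 = 2%:R * (a2 * v0) - 3%:R.
  apply/eqP; rewrite -subr_eq0; apply/eqP.
  have -> : (u1 * v2) ^+ 2 - (2%:R * (a2 * v0) - 3%:R) = u1 * v2 * (u1 * v2 + a2 * v1) + u1 * v1 * (1 - a2 * v2)
     - (u0 * v2 + u1 * v1 + a2 * v0 - 3%:R) + (u0 * v2 - a2 * v0) by ring.
  by rewrite e3 e4 e2 hB; ring.
have hB2 : (a2 * v0 - 1) * (a2 * v0 + 1) = 0.
  have -> : (a2 * v0 - 1) * (a2 * v0 + 1) = (a2 * v0) * (a2 * v0 - u0 * v2) + ((u0 * v0) * (a2 * v2) - 1) by ring.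
  have -> : a2 * v0 - u0 * v2 = 0 by rewrite hB subrr.
  by rewrite e0 e4 mulr1 subrr mulr0 addr0.
move: hB2 => /eqP; rewrite mulf_eq0 => /orP[|] /eqP hb.
  apply: (nosq (u1 * v2)); right; left.
  rewrite hx (_ : a2 * v0 = 1); first by ring.
  by move: hb => /eqP; rewrite subr_eq0 => /eqP.
apply: (nosq (u1 * v2)); right; right.
rewrite hx (_ : a2 * v0 = -1); first by ring.
by move: hb => /eqP; rewrite addr_eq0 => /eqP.
Qed.

Lemma decomp0 (f : {poly F}) : f != 0 -> exists a f1, f = 'X^a * f1 /\ ~~ root f1 0.
Proof.
move=> f0; have [m [q hq ->]] := multiplicity_XsubC f 0.
exists m, q; split; first by rewrite polyC0 subr0 mulrC.
by move: hq; rewrite f0.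
Qed.

Lemma sizeP : size P = 5%N.
Proof.
rewrite -addrA size_addl size_polyXn //; apply: (leq_ltn_trans (size_add _ _)).
by rewrite gtn_max size_poly1 (leq_ltn_trans (size_scale_leq _ _)) ?size_polyXn.
Qed.

Lemma root_of_factor (f g : {poly F}) r : P = f * g -> root f r -> False.
Proof.
move=> e rf; have := P_noroot r; rewrite e /root hornerM (eqP rf) mul0r eqxx.
by [].
Qed.

Lemma laurentP : laurent_irreducible P.
Proof.
have Pnz : P != 0 by rewrite -size_poly_eq0 sizeP.
split => //.
  move=> [c [k [c0 e]]].
  have : size P = k.+1 by rewrite e size_scale // size_polyXn.
  rewrite sizeP => -[k4]; move: P0; rewrite e -k4 hornerZ hornerXn expr0n /= mulr0.
  by move/eqP; rewrite eq_sym oner_eq0.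
move=> n f g e.
have fg0 : f * g != 0 by rewrite -e mulf_neq0 // expf_neq0 // polyX_eq0.
have f0 : f != 0 by apply: contraNneq fg0 => ->; rewrite mul0r.
have g0 : g != 0 by apply: contraNneq fg0 => ->; rewrite mulr0.
have [a [f1 [ef rf1]]] := @decomp0 f f0.
have [b [g1 [eg rg1]]] := @decomp0 g g0.
have e' : 'X^n * P = 'X^(a + b) * (f1 * g1) by rewrite e ef eg exprD; ring.
have Xn0 k : ('X^k : {poly F}) != 0 by rewrite expf_neq0 // polyX_eq0.
have eP : P = f1 * g1.
  case: (ltngtP n (a + b)) => hab.
  - move: e'; rewrite -(subnKC (ltnW hab)) exprD -mulrA => /(mulfI (Xn0 n)) e2.
    move: P0; rewrite e2 hornerM hornerXn expr0n subn_eq0 leqNgt hab /= mul0r.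
    by move/eqP; rewrite eq_sym oner_eq0.
  - move: e'; rewrite -(subnKC (ltnW hab)) exprD -mulrA => /(mulfI (Xn0 _)) e2.
    have : (f1 * g1).[0] = 0 by rewrite -e2 hornerM hornerXn expr0n subn_eq0 leqNgt hab /= mul0r.
    move/eqP; rewrite hornerM mulf_eq0 => /orP[] h.
      by move: rf1; rewrite /root h.
    by move: rg1; rewrite /root h.
  - by move: e'; rewrite hab => /(mulfI (Xn0 _)).
have f10 : f1 != 0 by apply: contraNneq Pnz => h; rewrite eP h mul0r.
have g10 : g1 != 0 by apply: contraNneq Pnz => h; rewrite eP h mulr0.
have hs : ((size f1 + size g1).-1 = 5)%N by rewrite -size_mul // -eP sizeP.
have [sf1|sf1] := eqVneq (size f1) 1%N.
  left; have /size_poly1P [c c0 ec] : size f1 == 1%N by rewrite sf1.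
  by exists c, a; split => //; rewrite ef ec mulrC mul_polyC.
have [sg1|sg1] := eqVneq (size g1) 1%N.
  right; have /size_poly1P [c c0 ec] : size g1 == 1%N by rewrite sg1.
  by exists c, b; split => //; rewrite eg ec mulrC mul_polyC.
have sf0 : size f1 != 0%N by rewrite size_poly_eq0.
have sg0 : size g1 != 0%N by rewrite size_poly_eq0.
exfalso.
move: sf1 sg1 sf0 sg0 hs.
case Ef: (size f1) => [|[|[|[|[|[|k]]]]]] //; case Eg: (size g1) => [|[|[|[|[|[|l]]]]]] //=; rewrite ?addnS ?addSn //.
- move=> *; have [r rr] := size2_root _ Ef; exact: (root_of_factor _ _ _ eP rr).
- move=> *; apply: (quad_false _ _ Ef Eg); by rewrite eP.
- move=> *; have [r rr] := size2_root _ Eg; apply: (root_of_factor g1 f1 r _ rr); by rewrite eP mulrC.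
Qed.
End D.

Lemma rat_final (a b c : rat) : a * b = 0 -> a ^+ 2 - 7%:R * b ^+ 2 = c ->
  c = 5%:R \/ c = -1 \/ c = - 5%:R -> False.
Proof.
move=> /eqP; rewrite mulf_eq0 => /orP[] /eqP -> <-.
  rewrite expr0n /= add0r => h.
  have hb := sqr_ge0 b.
  case: h => [h|[h|h]].
  - lra.
  - have : (7%:R * b) ^+ 2 = 7%:R by rewrite exprMn; lra.
    by move/rat_sq_nat => [m hm]; apply: (no_sq _ _ hm).
  - have : (7%:R * b) ^+ 2 = 35%:R by rewrite exprMn; lra.
    by move/rat_sq_nat => [m hm]; apply: (no_sq _ _ hm).
rewrite expr0n /= mulr0 subr0 => h.
have ha := sqr_ge0 a.
case: h => [h|[h|h]].
- by move: h => /rat_sq_nat [m hm]; apply: (no_sq _ _ hm).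
- lra.
- lra.
Qed.


Theorem mainTheorem6 (L : fieldExtType rat) (z : L)
    (hz : 7.-primitive_root z) (hgen : <<1%VS; z>>%VS = fullv) :
  laurent_irreducible ('X^4 + 3%:R *: 'X^2 + 1 : {poly L}).
Proof.
have dL := dimL _ _ hz hgen.
have sz : \sum_(i < 7) z ^+ i = 0.
  have := Phi7z _ _ hz; rewrite /root /Phi7 rmorph_sum horner_sum /= => /eqP e.
  by rewrite -[RHS]e; apply: eq_bigr => i _; rewrite map_polyXn hornerXn.
have hw : (2%:R * eta L z + 1) ^+ 2 = - 7%:R.
  have -> : (2%:R * eta L z + 1) ^+ 2 = 4%:R * (eta L z ^+ 2 + eta L z + 2%:R) - 7%:R by ring.
  by rewrite (etaE _ _ sz) mulr0 add0r.
apply: laurentP => x hx.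
have hc (c : rat) : x ^+ 2 = c%:A -> c = 5%:R \/ c = -1 \/ c = - 5%:R -> False.
  move=> hxc hcv; have [a [b [h1 h2]]] := sq_form _ _ hw dL _ _ hxc.
  exact: (rat_final _ _ _ h1 h2 hcv).
case: hx => [h|[h|h]].
- apply: (hc 5%:R); last by left.
  by rewrite h -[RHS]/(in_alg L _) rmorph_nat.
- apply: (hc (-1)); last by right; left.
  by rewrite h -[RHS]/(in_alg L _) rmorphN1.
- apply: (hc (- 5%:R)); last by right; right.
  by rewrite h -[RHS]/(in_alg L _) rmorphN rmorph_nat.
Qed.
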